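(* Let $G$ be a graph on $t>1000$ vertices. For $i\in\{2,3\}$ let $e_i$ be the number of edges of $G$ of weight $i$, and let $\bar{e}$ be the number of edges of the complement of $G$. If $\bar{e}\le t^2/4$, then $w(G)=2^{e_2}3^{e_3}\le 2^{\binom{t}{2}}2^{-0.16\bar{e}}$. If $\bar{e}>t^2/4$, then $w(G)<3^{t^2/4}$.
   Context: For a graph $G$, give each edge weight $2$ if it belongs to some triangle of $G$ and weight $3$ otherwise; $w(G)$ is the product of the weights of all edges of $G$. *)

(* Defs.v *)
From mathcomp Require Import all_boot.
From Stdlib Require Import Reals.
Set Implicit Arguments. Unset Strict Implicit. Unset Printing Implicit Defensive.

(* A simple graph on a finite vertex type T is a symmetric irreflexive relation e. *)

Definition edges (T : finType) (e : rel T) : {set {set T}} :=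
  [set A : {set T} | [exists x, exists y, (x != y) && e x y && (A == [set x; y])]].

Definition in_triangle (T : finType) (e : rel T) (A : {set T}) : bool :=
  [exists z, [forall x in A, e x z]].

Definition edge_weight (T : finType) (e : rel T) (A : {set T}) : nat :=
  if in_triangle e A then 2 else 3.

Definition w (T : finType) (e : rel T) : nat :=
  \prod_(A in edges e) edge_weight e A.

Definition e2 (T : finType) (e : rel T) : nat :=
  #|[set A in edges e | in_triangle e A]|.
Definition e3 (T : finType) (e : rel T) : nat :=
  #|[set A in edges e | ~~ in_triangle e A]|.

Definition compl_rel (T : finType) (e : rel T) : rel T :=
  fun x y => (x != y) && ~~ e x y.
Definition ebar (T : finType) (e : rel T) : nat := #|edges (compl_rel e)|.

(* Main.v *)
Require Import Defs.
From mathcomp Require Import all_boot.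
From Stdlib Require Import Reals.
From mathcomp Require Import zify.
From Stdlib Require Import Lia ZArith Lra Psatz.

Lemma F5Z (t d n : Z) : (1000 < t -> 0<=d -> 0<=n -> d+n<=t -> 14*d+14*(d*n) <= 7*t*n + 2*t*d)%Z.
Proof.
intros ht hd hn hdn.
destruct (Z_le_gt_dec (14*n+14) (2*t)) as [H|H].
- assert (0 <= d*(2*t-14-14*n))%Z by (apply Z.mul_nonneg_nonneg; lia). lia.
- assert (0 <= (t-n-d)*(14*n+14-2*t))%Z by (apply Z.mul_nonneg_nonneg; lia).
  assert (0 <= (4*t-9*n)*(4*t-9*n))%Z by (apply Z.square_nonneg).
  assert (142 <= n)%Z by lia.
  assert (0 <= n*(n-142))%Z by (apply Z.mul_nonneg_nonneg; lia).
  lia.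
Qed.

Section S.
Variable T : finType.

Lemma sum_pairs (r : rel T) : symmetric r ->
  \sum_x \sum_y ((x != y) && r x y : nat) = 2 * #|edges r|.
Proof.
move=> rs.
rewrite pair_big /=.
rewrite (eq_bigr (fun p : T * T => if (p.1 != p.2) && r p.1 p.2 then 1 else 0)) //.
rewrite -big_mkcond /=.
rewrite (partition_big (fun p : T * T => [set p.1; p.2]) (mem (edges r))) /=; last first.
  case=> a b /= /andP[ab rab]; rewrite inE; apply/existsP; exists a; apply/existsP; exists b.
  by rewrite ab rab /=.
rewrite mulnC -sum_nat_const; apply: eq_bigr => A.
rewrite inE => /existsP[x /existsP[y /andP[/andP[xy rxy] /eqP ->]]].
rewrite (eq_bigl (mem [set (x, y); (y, x)])); last first.
  case=> a b /=; rewrite !inE.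
  apply/idP/idP.
  - case/andP=> /andP[ab rab] /eqP E.
    have ha : a \in [set x; y] by rewrite -E !inE eqxx.
    have hb : b \in [set x; y] by rewrite -E !inE eqxx orbT.
    move: ha hb; rewrite !inE => /orP[] /eqP Ea /orP[] /eqP Eb; subst a b.
    + by rewrite eqxx in ab.
    + by rewrite !eqxx.
    + by rewrite !eqxx orbT.
    + by rewrite eqxx in ab.
  - case/orP=> /eqP[-> ->]; first by rewrite xy rxy eqxx.
    by rewrite (eq_sym y x) xy (rs y x) rxy setUC eqxx.
rewrite sum1_card cards2.
by rewrite xpair_eqE negb_and xy.
Qed.


Lemma edges_sub (e : rel T) (P : {set T} -> bool) :
  [set A in edges e | P A] = edges (fun x y => e x y && P [set x; y]).
Proof.
apply/setP => A; rewrite !inE; apply/idP/idP.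
- case/andP=> /existsP[x /existsP[y /andP[/andP[xy exy] /eqP EA]]] PA.
  apply/existsP; exists x; apply/existsP; exists y; rewrite xy exy -EA PA eqxx //.
- case/existsP=> x /existsP[y /andP[/andP[xy /andP[exy PA]] /eqP EA]].
  rewrite EA PA andbT; apply/existsP; exists x; apply/existsP; exists y.
  by rewrite xy exy eqxx.
Qed.

Lemma tri2 (e : rel T) x y :
  in_triangle e [set x; y] = [exists z, e x z && e y z].
Proof.
apply/existsP/existsP => [[z /forallP H]|[z /andP[H1 H2]]]; exists z.
- have := H x; have := H y; rewrite !inE !eqxx orbT /= => -> ->; by [].
- apply/forallP => u; rewrite !inE; apply/implyP => /orP[] /eqP -> //.
Qed.

Lemma sum_eq1 (x : T) : \sum_y ((y == x) : nat) = 1.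
Proof.
rewrite (bigD1 x) //= eqxx big1 // => y /negbTE -> //.
Qed.

Lemma cardT_sum : #|T| = \sum_(y : T) 1.
Proof. by rewrite sum1_card. Qed.


Section Key.
Variable e : rel T.
Hypothesis e_sym : symmetric e.
Let h x y := e x y && ~~ in_triangle e [set x; y].
Let c x y := compl_rel e x y.
Let d x := \sum_y ((x != y) && h x y : nat).
Let n x := \sum_y ((x != y) && c x y : nat).

Lemma h_sym : symmetric h.
Proof. by move=> x y; rewrite /h e_sym setUC. Qed.

Lemma F1 x : d x + n x <= #|T|.
Proof.
rewrite /d /n -big_split cardT_sum; apply: leq_sum => y _.
rewrite /h /c /compl_rel /=; case: (x == y) => //=; case: (e x y) => //=; by case: (in_triangle _ _).
Qed.

Lemma F2 x y : (x != y) && h x y -> #|T| <= n x + n y + 2.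
Proof.
case/andP=> xy /andP[exy]; rewrite tri2 negb_exists => /forallP nt.
rewrite -[2]/(1 + 1) -{1}(sum_eq1 x) -(sum_eq1 y) /n -!big_split cardT_sum.
apply: leq_sum => z _ /=.
have := nt z; rewrite /c /compl_rel.
case: (z =P x) => [->|zx]; first by rewrite eqxx; lia.
case: (z =P y) => [->|zy]; first by rewrite eqxx; lia.
rewrite (eq_sym x z) (eq_sym y z).
have -> : (z == x) = false by apply/eqP.
have -> : (z == y) = false by apply/eqP.
by case: (e x z); case: (e y z).
Qed.

Lemma F3 : \sum_x \sum_y ((x != y) && h x y : nat) * (n x + n y)
   = 2 * \sum_x d x * n x.
Proof.
have E1 : \sum_x \sum_y ((x != y) && h x y : nat) * n x = \sum_x d x * n x.
  by apply: eq_bigr => x _; rewrite /d big_distrl.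
have E2 : \sum_x \sum_y ((x != y) && h x y : nat) * n y = \sum_x d x * n x.
  rewrite exchange_big; apply: eq_bigr => y _; rewrite /d big_distrl.
  by apply: eq_bigr => x _; rewrite eq_sym h_sym.
rewrite mul2n -addnn -{1}E1 -E2 -big_split /=.
by apply: eq_bigr => x _; rewrite -big_split; apply: eq_bigr => y _; rewrite mulnDr.
Qed.

Lemma F4 : (#|T| - 2) * \sum_x d x <= 2 * \sum_x d x * n x.
Proof.
rewrite -F3 big_distrr; apply: leq_sum => x _.
rewrite /d big_distrr; apply: leq_sum => y _.
case H : ((x != y) && h x y); last by rewrite /=; lia.
have := F2 x y H; change (#|T| <= n x + n y + 2 -> muln (#|T| - 2) 1 <= muln 1 (n x + n y)); lia.
Qed.

Lemma F5 (t dd nn : nat) : 1000 < t -> dd + nn <= t ->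
  14 * dd + 14 * (dd * nn) <= 7 * t * nn + 2 * t * dd.
Proof. move=> ht hdn. have := F5Z (Z.of_nat t) (Z.of_nat dd) (Z.of_nat nn). lia. Qed.

Lemma key : 1000 < #|T| -> 5 * \sum_x d x <= 7 * \sum_x n x.
Proof.
move=> ht.
have S5 : 14 * \sum_x d x + 14 * \sum_x d x * n x <=
          7 * #|T| * \sum_x n x + 2 * #|T| * \sum_x d x.
  rewrite !big_distrr -!big_split; apply: leq_sum => x _; apply: F5 => //; exact: F1.
have := F4; move: S5.
set D := \sum_x d x; set N := \sum_x n x; set S := \sum_x d x * n x.
move=> S5 S4.
have : #|T| * (5 * D) <= #|T| * (7 * N) by lia.
rewrite leq_pmul2l //; lia.
Qed.

End Key.


Lemma w_eq (e : rel T) : w e = expn 2 (e2 e) * expn 3 (e3 e).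
Proof.
rewrite /w (bigID (fun A => in_triangle e A)) /=.
rewrite /e2 /e3 -!prod_nat_const.
congr (_ * _); apply: eq_big => A; rewrite ?inE //; rewrite /edge_weight;
  case/andP => _ H; rewrite ?H //; by rewrite (negbTE H).
Qed.

Lemma counts (e : rel T) : symmetric e ->
  2 * e2 e + 2 * e3 e + 2 * ebar e = #|T| * (#|T| - 1).
Proof.
move=> es.
have s2 : symmetric (fun x y => e x y && in_triangle e [set x; y]).
  by move=> x y; rewrite es setUC.
have s3 : symmetric (fun x y => e x y && ~~ in_triangle e [set x; y]).
  by move=> x y; rewrite es setUC.
have sc : symmetric (compl_rel e).
  by move=> x y; rewrite /compl_rel es eq_sym.
rewrite /e2 /e3 /ebar (edges_sub e (in_triangle e)) (edges_sub e (fun A => ~~ in_triangle e A)).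
rewrite -(sum_pairs _ s2) -(sum_pairs _ s3) -(sum_pairs _ sc) -!big_split.

have E : forall x : T, \sum_y ((x != y) : nat) = #|T| - 1.
  move=> x; have := sum_eq1 x; rewrite cardT_sum.
  have : \sum_(y : T) 1 = \sum_y (((x != y) : nat) + ((y == x) : nat)).
    by apply: eq_bigr => y _; rewrite eq_sym; case: (y == x).
  rewrite big_split /= => ->; lia.
rewrite {1}cardT_sum big_distrl /=.
apply: eq_bigr => x _; rewrite -!big_split mul1n -(E x) /=; apply: eq_bigr => y _ /=.
rewrite /compl_rel; case: (x == y) => //=; case: (e x y) => //=; by case: (in_triangle _ _).
Qed.

End S.

Lemma bin2_double n : 'C(n, 2) * 2 = n * (n - 1).
Proof.
elim: n => [|n IH] //.
rewrite binS bin1 mulnDl IH; nia.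
Qed.

Lemma expn_pow m k : expn m k = Nat.pow m k.
Proof. elim: k => [|k IH] //; by rewrite expnS IH. Qed.

Lemma powexp (x : R) k : (0 < x)%R -> (x ^ k)%R = exp (INR k * ln x).
Proof. move=> hx; by rewrite -Rpower_pow. Qed.

Lemma exp_le' (x y : R) : (x <= y)%R -> (exp x <= exp y)%R.
Proof. case=> [h|->]; [left; exact: exp_increasing | right; reflexivity]. Qed.

Lemma ln3_ln2 : (5 * ln 3 <= 8 * ln 2)%R.
Proof.
have h5 : (5 * ln 3 = ln (3 ^ 5))%R by rewrite ln_pow; [simpl; lra | lra].
have h8 : (8 * ln 2 = ln (2 ^ 8))%R by rewrite ln_pow; [simpl; lra | lra].
rewrite h5 h8; left; apply: ln_increasing; simpl; lra.
Qed.

Theorem lemma4p3 (T : finType) (e : rel T)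
    (e_sym : symmetric e) (e_irr : irreflexive e) (ht : 1000 < #|T|) :
  w e = 2 ^ e2 e * 3 ^ e3 e /\
  ((INR (ebar e) <= INR #|T| ^ 2 / 4)%R ->
     (INR (w e) <= 2 ^ 'C(#|T|, 2) * Rpower 2 (- (16 / 100) * INR (ebar e)))%R) /\
  ((INR (ebar e) > INR #|T| ^ 2 / 4)%R ->
     (INR (w e) < Rpower 3 (INR #|T| ^ 2 / 4))%R).
Proof.
have Hw : w e = Nat.mul (Nat.pow 2 (e2 e)) (Nat.pow 3 (e3 e)) by rewrite w_eq !expn_pow.
have Hc := @counts _ _ e_sym.
have Hk := @key _ _ e_sym ht.
have s3 : symmetric (fun x y => e x y && ~~ in_triangle e [set x; y]).
  by move=> x y; rewrite e_sym setUC.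
have sc : symmetric (compl_rel e).
  by move=> x y; rewrite /compl_rel e_sym eq_sym.
rewrite (@sum_pairs _ _ s3) (@sum_pairs _ _ sc) in Hk.
rewrite -(@edges_sub _ e (fun A => ~~ in_triangle e A)) -/(e3 e) -/(ebar e) in Hk.
have Hb := bin2_double #|T|.
move: Hw Hc Hk Hb.
set a := e2 e; set b := e3 e; set c := ebar e; set C := 'C(#|T|, 2); set t := #|T|.
move=> Hw Hc Hk Hb.
have HabcC : (a + b + c)%coq_nat = C by lia.
have H5 : (5 * b <= 7 * c)%coq_nat by lia.
have HC2 : (C * 2 + t)%coq_nat = (t * t)%coq_nat by nia.
have RabcC : (INR a + INR b + INR c = INR C)%R by rewrite -HabcC !plus_INR.
have R5 : (5 * INR b <= 7 * INR c)%R.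
  have := le_INR _ _ H5; rewrite !mult_INR /=; lra.
have RC2 : (INR C * 2 + INR t = INR t * INR t)%R.
  have := f_equal INR HC2; rewrite plus_INR !mult_INR /=; lra.
have Rw : INR (w e) = (2 ^ a * 3 ^ b)%R.
  by rewrite Hw mult_INR !pow_INR /=; f_equal; f_equal; lra.
have l2 : (0 < ln 2)%R by have := ln_lt_2; lra.
have l3 := ln3_ln2.
have pa := pos_INR a; have pb := pos_INR b; have pc := pos_INR c.
split; first by rewrite Hw.
split.
- move=> _; rewrite Rw (powexp _ a) ?(powexp _ b) ?(powexp _ C); try lra.
  rewrite /Rpower -!exp_plus; apply: exp_le'.
  rewrite -RabcC.
  have : (0 <= INR b * (8 * ln 2 - 5 * ln 3))%R by apply: Rmult_le_pos; lra.
  have : (0 <= (7 * INR c - 5 * INR b) * ln 2)%R by apply: Rmult_le_pos; lra.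
  nra.
- move=> Hgt; rewrite Rw.
  apply: (Rle_lt_trans _ (3 ^ a * 3 ^ b)%R).
    apply: Rmult_le_compat_r; first by apply: pow_le; lra.
    apply: pow_incr; lra.
  rewrite -pow_add -Rpower_pow; last lra.
  apply: Rpower_lt; first lra.
  have pt := pos_INR t.
  have E2 : (INR t ^ 2 = INR t * INR t)%R by simpl; ring.
  rewrite plus_INR; rewrite E2 in Hgt *; lra.
Qed.
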